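(* Let $O_{(4,1)}(x,y,z,w)=x^4z^2w^2+y^4x^2w^2+z^4x^2y^2+w^4y^2z^2-4x^2y^2z^2w^2$, let $0\le a\le1$ and $\alpha,\beta\in\mathbb R$. If $F_1=a\,O_{(4,1)}+x^2yz^2w(\alpha y^2+\beta w^2)$ is positive semidefinite on $\mathbb R^4$, then $\alpha=\beta=0$. *)

(* Defs.v *)
From Stdlib Require Import Reals.
Open Scope R_scope.

Definition O41 (x y z w : R) : R :=
  x^4*z^2*w^2 + y^4*x^2*w^2 + z^4*x^2*y^2 + w^4*y^2*z^2 - 4*x^2*y^2*z^2*w^2.

Definition F1 (a alpha beta : R) (x y z w : R) : R :=
  a * O41 x y z w + x^2*y*z^2*w*(alpha*y^2 + beta*w^2).

Definition psd4 (f : R -> R -> R -> R -> R) : Prop :=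
  forall x y z w : R, 0 <= f x y z w.

(* Main.v *)
Require Import Defs.
From Stdlib Require Import Reals Lra Psatz.
Open Scope R_scope.

Lemma g_eq (a alpha beta y : R) :
  F1 a alpha beta 1 y 1 1 = a*(y^2-1)^2 + alpha*y^3 + beta*y.
Proof. unfold F1, O41. ring. Qed.

Lemma pos_case (a alpha beta : R) (ha0 : 0 <= a) (ha1 : a <= 1)
  (hs : beta = - alpha) (hp : 0 < alpha)
  (hg : forall y, 0 <= a*(y^2-1)^2 + alpha*y^3 + beta*y) : False.
Proof.
  set (y := 4 / (alpha + 4)).
  assert (hy : y * (alpha + 4) = 4) by (unfold y; field; lra).
  assert (y0 : 0 < y) by (unfold y; apply Rdiv_lt_0_compat; lra).
  assert (y1 : y < 1) by nra.
  assert (h1 : 0 < 1 - y^2) by nra.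
  assert (h2 : 1 - y^2 < alpha * y) by nra.
  assert (h3 : a*(1-y^2) - alpha*y < 0) by nra.
  specialize (hg y). subst beta.
  assert (E : a*(y^2-1)^2 + alpha*y^3 + - alpha*y = (1-y^2)*(a*(1-y^2) - alpha*y)) by ring.
  rewrite E in hg. nra.
Qed.

Theorem lemma3 (a alpha beta : R) (ha0 : 0 <= a) (ha1 : a <= 1)
  (hpsd : psd4 (F1 a alpha beta)) : alpha = 0 /\ beta = 0.
Proof.
  assert (hg : forall y, 0 <= a*(y^2-1)^2 + alpha*y^3 + beta*y).
  { intro y. rewrite <- g_eq. apply hpsd. }
  assert (s1 := hg 1). assert (s2 := hg (-1)).
  assert (hs : beta = - alpha) by nra.
  assert (alpha = 0).
  { destruct (Rtotal_order alpha 0) as [Hl|[He|Hg]]; auto.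
    - exfalso. apply (pos_case a (-alpha) (-beta)); try lra.
      intro y. specialize (hg (-y)). nra.
    - exfalso. exact (pos_case a alpha beta ha0 ha1 hs Hg hg). }
  lra.
Qed.
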